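(* Consider problem (VP) under the standing assumptions at $\bar x\in Q_0$. Let $\bar x$ be a local Geoffrion properly efficient solution of (VP), let $u\in\mathcal{C}(\bar x)$, and suppose $L^2(Q;\bar x,u)\subset T^2(Q_0;\bar x,u)$. Then there is no $v\in X$ such that $f_i^{\circ}(\bar x,v)+f_i^{\circ\circ}(\bar x,u)\leqq0$ for all $i\in I(\bar x;u)$, $f_i^{\circ}(\bar x,v)+f_i^{\circ\circ}(\bar x,u)<0$ for at least one $i\in I(\bar x;u)$, and $g_j^{\circ}(\bar x,v)+g_j^{\circ\circ}(\bar x,u)\leqq0$ for all $j\in J(\bar x;u)$.
   Context: Standing setting: $X$ is a Banach space; $I=\{1,\dots,p\}$, $J=\{1,\dots,m\}$; $f_i,g_j\colon X\to\mathbb{R}$; (VP) minimizes $f=(f_1,\dots,f_p)$ over $Q_0:=\{x\in X: g_j(x)\leqq 0,\ j\in J\}$. $J(\bar x):=\{j\in J: g_j(\bar x)=0\}$. Standing assumptions: $f_i$ ($i\in I$), $g_j$ ($j\in J(\bar x)$) locally Lipschitz at $\bar x$; $g_j$ ($j\notin J(\bar x)$) continuous at $\bar x$. $F^{\circ}(\bar x,u):=\limsup_{x\to\bar x,\,t\downarrow0}\frac{F(x+tu)-F(x)}{t}$; $F^{\circ\circ}(\bar x,u):=\limsup_{t\downarrow0}\frac{F(\bar x+tu)-F(\bar x)-tF^{\circ}(\bar x,u)}{\frac12t^2}$. $I(\bar x;u):=\{i\in I: f_i^{\circ}(\bar x,u)=0\}$, $J(\bar x;u):=\{j\in J(\bar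 x): g_j^{\circ}(\bar x,u)=0\}$. Lexicographic order on $\mathbb{R}^2$: $a\leqq_{\rm lex}b$ iff $a_1<b_1$ or ($a_1=b_1$, $a_2\leqq b_2$). $F_i^2(\bar x;u,v):=(f_i^{\circ}(\bar x,u),\, f_i^{\circ}(\bar x,v)+f_i^{\circ\circ}(\bar x,u))$, $G_j^2(\bar x;u,v):=(g_j^{\circ}(\bar x,u),\, g_j^{\circ}(\bar x,v)+g_j^{\circ\circ}(\bar x,u))$. $Q:=Q_0\cap\{x: f_i(x)\leqq f_i(\bar x),\ i\in I\}$; $L^2(Q;\bar x,u):=\{v: F_i^2(\bar x;u,v)\leqq_{\rm lex}(0,0)\ \forall i\in I,\ G_j^2(\bar x;u,v)\leqq_{\rm lex}(0,0)\ \forall j\in J(\bar x)\}$. $T^2(\Omega;\bar x,u):=\{v: \exists t_k\downarrow0,\ \exists v^k\to v,\ \bar x+t_ku+\frac12t_k^2v^k\in\Omega\ \forall k\}$. Critical direction: $u$ with $f_i^{\circ}(\bar x,u)\leqq0$ for all $i$, $=0$ for some $i$, and $g_j^{\circ}(\bar x,u)\leqq0$ for all $j\in J(\bar x)$; $\mathcal{C}(\bar x)$ is the set of these. Local Geoffrion properly efficient solution: there is a neighborhood $U$ of $\bar x$ such that (a) no $x\in U\cap Q_0$ has $f(x)\leqq f(\bar x)$ componentwise with $f(x)\ne f(\bar x)$, and (b) there is $M>0$ such that for every $i\in I$ and every $x\in U\cap Q_0$ with $f_i(x)<f_i(\bar x)$ there exists $j\in I$ with $f_j(x)>f_j(\bar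 x)$ and $\frac{f_i(\bar x)-f_i(x)}{f_j(x)-f_j(\bar x)}\leqq M$. *)

(* Defs.v *)
From Stdlib Require Import Reals Lra Classical ClassicalEpsilon.
Open Scope R_scope.

Record Banach : Type := mkBanach {
  bcar :> Type;
  bzero : bcar;
  badd : bcar -> bcar -> bcar;
  bopp : bcar -> bcar;
  bscal : R -> bcar -> bcar;
  bnorm : bcar -> R;
  badd_assoc : forall x y z, badd x (badd y z) = badd (badd x y) z;
  badd_comm : forall x y, badd x y = badd y x;
  badd_zero : forall x, badd x bzero = x;
  badd_opp : forall x, badd x (bopp x) = bzero;
  bscal_one : forall x, bscal 1 x = x;
  bscal_assoc : forall a b x, bscal a (bscal b x) = bscal (a * b) x;
  bscal_distr_l : forall a x y, bscal a (badd x y) = badd (bscal a x) (bscal a y);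
  bscal_distr_r : forall a b x, bscal (a + b) x = badd (bscal a x) (bscal b x);
  bnorm_nonneg : forall x, 0 <= bnorm x;
  bnorm_eq0 : forall x, bnorm x = 0 -> x = bzero;
  bnorm_scal : forall a x, bnorm (bscal a x) = Rabs a * bnorm x;
  bnorm_triangle : forall x y, bnorm (badd x y) <= bnorm x + bnorm y;
  bcomplete : forall s : nat -> bcar,
    (forall eps, 0 < eps -> exists N, forall n m, (N <= n)%nat -> (N <= m)%nat ->
        bnorm (badd (s n) (bopp (s m))) < eps) ->
    exists l, forall eps, 0 < eps -> exists N, forall n, (N <= n)%nat ->
        bnorm (badd (s n) (bopp l)) < eps
}.

Arguments bzero {b0}.
Arguments badd {b0}.
Arguments bopp {b0}.
Arguments bscal {b0}.
Arguments bnorm {b0}.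

Definition bdist {X : Banach} (x y : X) : R := bnorm (badd x (bopp y)).

Definition seq_cv {X : Banach} (s : nat -> X) (l : X) : Prop :=
  forall eps, 0 < eps -> exists N, forall n, (N <= n)%nat -> bdist (s n) l < eps.

Inductive ERbar : Type := Fin (r : R) | PInf | MInf.

Definition ERle (a b : ERbar) : Prop :=
  match a, b with
  | MInf, _ => True
  | _, PInf => True
  | Fin x, Fin y => x <= y
  | _, _ => False
  end.
Definition ERlt (a b : ERbar) : Prop := ERle a b /\ a <> b.

(* addition; the undefined case (+oo) + (-oo) never occurs in the statement
   because the first summand is always a (finite) Clarke derivative *)
Definition ERplus (a b : ERbar) : ERbar :=
  match a, b with
  | Fin x, Fin y => Fin (x + y)
  | PInf, _ | _, PInf => PInf
  | _, _ => MInf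
  end.

Definition ER_real (a : ERbar) : R := match a with Fin x => x | _ => 0 end.

Definition ERsup (E : R -> Prop) : ERbar :=
  match excluded_middle_informative (exists x, E x) with
  | left ne =>
      match excluded_middle_informative (bound E) with
      | left bd => Fin (proj1_sig (completeness E bd ne))
      | right _ => PInf
      end
  | right _ => MInf
  end.

Definition ERinf (S : ERbar -> Prop) : ERbar :=
  match excluded_middle_informative (S MInf) with
  | left _ => MInf
  | right _ =>
    match ERsup (fun r => S (Fin (- r))) with
    | Fin r => Fin (- r)
    | PInf => MInf
    | MInf => PInf
    end
  end.

(* Clarke derivative: limsup_{x -> xb, t downarrow 0} (F(x+tu)-F(x))/t *)
Definition clarke {X : Banach} (F : X -> R) (xb u : X) : ERbar :=
  ERinf (fun e => exists d, 0 < d /\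
    e = ERsup (fun q => exists (x : X) (t : R),
          bdist x xb < d /\ 0 < t < d /\
          q = (F (badd x (bscal t u)) - F x) / t)).

(* second-order: limsup_{t downarrow 0} (F(xb+tu)-F(xb)-t F°(xb,u)) / (t^2/2) *)
Definition clarke2 {X : Banach} (F : X -> R) (xb u : X) : ERbar :=
  ERinf (fun e => exists d, 0 < d /\
    e = ERsup (fun q => exists t : R, 0 < t < d /\
          q = (F (badd xb (bscal t u)) - F xb - t * ER_real (clarke F xb u))
                / (t ^ 2 / 2))).

Definition loc_lipschitz {X : Banach} (F : X -> R) (xb : X) : Prop :=
  exists L d, 0 < d /\ forall x y : X, bdist x xb < d -> bdist y xb < d ->
    Rabs (F x - F y) <= L * bdist x y.

Definition cont_at {X : Banach} (F : X -> R) (xb : X) : Prop :=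
  forall eps, 0 < eps -> exists d, 0 < d /\
    forall x : X, bdist x xb < d -> Rabs (F x - F xb) < eps.

(* I = {0,...,p-1}, J = {0,...,m-1} (0-based) *)
Definition Q0 {X : Banach} (m : nat) (g : nat -> X -> R) (x : X) : Prop :=
  forall j, (j < m)%nat -> g j x <= 0.

Definition active {X : Banach} (m : nat) (g : nat -> X -> R) (xb : X) (j : nat) : Prop :=
  (j < m)%nat /\ g j xb = 0.

Definition Qset {X : Banach} (p m : nat) (f g : nat -> X -> R) (xb x : X) : Prop :=
  Q0 m g x /\ forall i, (i < p)%nat -> f i x <= f i xb.

Definition lex_le0 (a1 a2 : ERbar) : Prop :=
  ERlt a1 (Fin 0) \/ (a1 = Fin 0 /\ ERle a2 (Fin 0)).

Definition F2 {X : Banach} (F : X -> R) (xb u v : X) : ERbar * ERbar :=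
  (clarke F xb u, ERplus (clarke F xb v) (clarke2 F xb u)).

Definition L2 {X : Banach} (p m : nat) (f g : nat -> X -> R) (xb u v : X) : Prop :=
  (forall i, (i < p)%nat -> lex_le0 (fst (F2 (f i) xb u v)) (snd (F2 (f i) xb u v))) /\
  (forall j, active m g xb j -> lex_le0 (fst (F2 (g j) xb u v)) (snd (F2 (g j) xb u v))).

Definition T2 {X : Banach} (Om : X -> Prop) (xb u v : X) : Prop :=
  exists (t : nat -> R) (w : nat -> X),
    (forall k, 0 < t k) /\ Un_cv t 0 /\ seq_cv w v /\
    forall k, Om (badd (badd xb (bscal (t k) u)) (bscal (t k ^ 2 / 2) (w k))).

Definition critical {X : Banach} (p m : nat) (f g : nat -> X -> R) (xb u : X) : Prop :=
  (forall i, (i < p)%nat -> ERle (clarke (f i) xb u) (Fin 0)) /\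
  (exists i, (i < p)%nat /\ clarke (f i) xb u = Fin 0) /\
  (forall j, active m g xb j -> ERle (clarke (g j) xb u) (Fin 0)).

(* local Geoffrion proper efficiency, neighbourhood taken as a ball *)
Definition loc_geoffrion {X : Banach} (p m : nat) (f g : nat -> X -> R) (xb : X) : Prop :=
  exists d, 0 < d /\
  (~ exists x : X, bdist x xb < d /\ Q0 m g x /\
       (forall i, (i < p)%nat -> f i x <= f i xb) /\
       (exists i, (i < p)%nat /\ f i x <> f i xb)) /\
  (exists M, 0 < M /\
     forall i x, (i < p)%nat -> bdist x xb < d -> Q0 m g x -> f i x < f i xb ->
       exists j, (j < p)%nat /\ f j x > f j xb /\
         (f i xb - f i x) / (f j x - f j xb) <= M).

(* Main.v *)
Require Import Defs.
From Stdlib Require Import Reals Lra Lia Classical ClassicalEpsilon.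
Open Scope R_scope.

Section Alg.
Variable X : Banach.
Implicit Types x y a b w v : X.

Lemma add0l x : badd bzero x = x.
Proof. rewrite badd_comm; apply badd_zero. Qed.

Lemma opp_unique a b : badd a b = bzero -> b = bopp a.
Proof.
  intro H. rewrite <- (badd_zero _ b), <- (badd_opp _ a), badd_assoc.
  rewrite (badd_comm _ b a), H. apply add0l.
Qed.

Lemma opp_add x y : bopp (badd x y) = badd (bopp x) (bopp y).
Proof.
  symmetry; apply opp_unique. rewrite badd_assoc.
  rewrite (badd_comm _ x y), <- (badd_assoc _ y x (bopp x)), badd_opp, badd_zero.
  apply badd_opp.
Qed.

Lemma scal0 x : bscal 0 x = bzero.
Proof.
  assert (H : bscal 0 x = badd (bscal 0 x) (bscal 0 x)).
  { rewrite <- bscal_distr_r. f_equal. ring. }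
  set (a := bscal 0 x) in *.
  transitivity (badd a (badd a (bopp a))).
  - rewrite badd_opp, badd_zero. reflexivity.
  - rewrite badd_assoc, <- H. apply badd_opp.
Qed.

Lemma scal_0 c : bscal c (@bzero X) = bzero.
Proof. transitivity (bscal c (bscal 0 (@bzero X))).
  - rewrite scal0. reflexivity.
  - rewrite bscal_assoc, Rmult_0_r. apply scal0. Qed.

Lemma norm0 : bnorm (@bzero X) = 0.
Proof. transitivity (bnorm (bscal 0 (@bzero X))).
  - rewrite scal0. reflexivity.
  - rewrite bnorm_scal, Rabs_R0. ring. Qed.

Lemma opp_scal c x : bopp (bscal c x) = bscal c (bopp x).
Proof. symmetry; apply opp_unique. rewrite <- bscal_distr_l, badd_opp. apply scal_0. Qed.

Lemma dist_shift y a b : bdist (badd y a) (badd y b) = bnorm (badd a (bopp b)).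
Proof.
  unfold bdist; rewrite opp_add. rewrite (badd_comm _ y a).
  rewrite <- (badd_assoc _ a y (badd (bopp y) (bopp b))).
  rewrite (badd_assoc _ y (bopp y) (bopp b)), badd_opp, add0l. reflexivity.
Qed.

Lemma dist_shift0 y a : bdist (badd y a) y = bnorm a.
Proof.
  unfold bdist. rewrite (badd_comm _ y a), <- badd_assoc, badd_opp, badd_zero. reflexivity.
Qed.

Lemma dist_pt x a b : bdist (badd (badd x a) b) x = bnorm (badd a b).
Proof. rewrite <- badd_assoc; apply dist_shift0. Qed.

Lemma norm_le_dist w v : bnorm w <= bnorm v + bdist w v.
Proof.
  assert (E : w = badd v (badd w (bopp v))).
  { rewrite (badd_comm _ w (bopp v)), badd_assoc, badd_opp, add0l. reflexivity. }
  rewrite E at 1. unfold bdist. apply bnorm_triangle.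
Qed.

Lemma dist_refl x : bdist x x = 0.
Proof. unfold bdist. rewrite badd_opp. apply norm0. Qed.

Lemma bdist_nonneg x y : 0 <= bdist x y.
Proof. apply bnorm_nonneg. Qed.
End Alg.

Definition ERltR (e : ERbar) (c : R) := e = MInf \/ exists x, e = Fin x /\ x < c.

Lemma ERsup_lt E c : ERltR (ERsup E) c -> forall q, E q -> q < c.
Proof.
  unfold ERsup.
  destruct (excluded_middle_informative (exists x, E x)) as [ne|nne].
  - destruct (excluded_middle_informative (bound E)) as [bd|nbd].
    + destruct (completeness E bd ne) as [r [Hub Hlub]]; simpl.
      intros [H|[x [H1 H2]]]; [discriminate|]. injection H1 as ->.
      intros q Hq. apply Hub in Hq. lra.
    + intros [H|[x [H _]]]; discriminate.
  - intros _ q Hq; exfalso; apply nne; eauto.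
Qed.

Lemma ERinf_lt S c : ERltR (ERinf S) c -> exists e, S e /\ ERltR e c.
Proof.
  unfold ERinf.
  destruct (excluded_middle_informative (S MInf)) as [hm|hm].
  { intros; exists MInf; split; auto; left; auto. }
  unfold ERsup.
  destruct (excluded_middle_informative (exists x, S (Fin (- x)))) as [ne|nne].
  - destruct (excluded_middle_informative (bound (fun r => S (Fin (- r))))) as [bd|nbd].
    + destruct (completeness _ bd ne) as [r [Hub Hlub]]; simpl.
      intros [H|[x [H1 H2]]]; [discriminate|]. injection H1 as Hx.
      destruct (classic (exists r', S (Fin (-r')) /\ -c < r')) as [[r' [H3 H4]]|Hn].
      * exists (Fin (-r')); split; auto; right; exists (-r'); split; auto; lra.
      * exfalso. assert (r <= -c).
        { apply Hlub. intros r' Hr'. destruct (Rle_dec r' (-c)); auto.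
          exfalso; apply Hn; exists r'; split; auto; lra. }
        lra.
    + intros _.
      destruct (classic (exists r', S (Fin (-r')) /\ -c < r')) as [[r' [H3 H4]]|Hn].
      * exists (Fin (-r')); split; auto; right; exists (-r'); split; auto; lra.
      * exfalso; apply nbd. exists (-c). intros r' Hr'.
        destruct (Rle_dec r' (-c)); auto.
        exfalso; apply Hn; exists r'; split; auto; lra.
  - intros [H|[x [H _]]]; discriminate.
Qed.

Lemma clarke_bound {X : Banach} (F : X -> R) xb u c :
  ERltR (clarke F xb u) c -> exists d, 0 < d /\ forall x t, bdist x xb < d -> 0 < t < d ->
    (F (badd x (bscal t u)) - F x) / t < c.
Proof.
  intros H. apply ERinf_lt in H. destruct H as [e [[d [Hd ->]] He]].
  exists d; split; auto. intros x t H1 H2. apply (ERsup_lt _ _ He). exists x, t; auto.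
Qed.

Lemma clarke2_bound {X : Banach} (F : X -> R) xb u c :
  ERltR (clarke2 F xb u) c -> exists d, 0 < d /\ forall t, 0 < t < d ->
    (F (badd xb (bscal t u)) - F xb - t * ER_real (clarke F xb u)) / (t ^ 2 / 2) < c.
Proof.
  intros H. apply ERinf_lt in H. destruct H as [e [[d [Hd ->]] He]].
  exists d; split; auto. intros t H2. apply (ERsup_lt _ _ He). exists t; auto.
Qed.

Lemma ERplus_split a b s c : ERle (ERplus a b) (Fin s) -> s < c ->
  exists al be, al + be < c /\ ERltR a al /\ ERltR b be.
Proof.
  destruct a as [x| |], b as [y| |]; simpl; intros H Hc; try contradiction.
  - exists (x + (c-s)/3), (y + (c-s)/3). split; [lra|]. split; right; eexists; split; eauto; lra.
  - exists (x+1), (c - x - 2). split; [lra|]. split; [right; eexists; split; eauto; lra|left; auto].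
  - exists (c - y - 2), (y+1). split; [lra|]. split; [left; auto|right; eexists; split; eauto; lra].
  - exists (c/2 - 1), (c/2 - 1). split; [lra|]. split; left; auto.
Qed.

Lemma ERlt_neg e : ERlt e (Fin 0) -> exists s, s < 0 /\ ERle e (Fin s).
Proof.
  destruct e as [r| |]; unfold ERlt; simpl; intros [H1 H2].
  - exists r. split; [|simpl; lra]. destruct (Req_dec r 0); [subst; congruence|lra].
  - contradiction.
  - exists (-1). split; [lra|exact I].
Qed.

Lemma ERle_ne_ltR e : ERle e (Fin 0) -> e <> Fin 0 -> exists al, al < 0 /\ ERltR e al.
Proof.
  destruct e as [r| |]; simpl; intros H1 H2.
  - exists (r/2). assert (r <> 0) by (intro; subst; auto). split; [lra|].
    right; exists r; split; auto; lra.
  - contradiction.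
  - exists (-1). split; [lra|left; auto].
Qed.

Lemma lip_pos {X : Banach} (F : X -> R) xb : loc_lipschitz F xb ->
  exists L d, 0 < L /\ 0 < d /\ forall x y, bdist x xb < d -> bdist y xb < d ->
    F x - F y <= L * bdist x y.
Proof.
  intros [L [d [Hd H]]]. exists (Rabs L + 1), d. split; [pose proof (Rabs_pos L); lra|].
  split; auto. intros x y Hx Hy. specialize (H x y Hx Hy).
  pose proof (Rle_abs (F x - F y)). pose proof (Rle_abs L).
  pose proof (bdist_nonneg X x y). nra.
Qed.

Definition pt {X : Banach} (xb u : X) t (w : X) :=
  badd (badd xb (bscal t u)) (bscal (t ^ 2 / 2) w).

Lemma pt_dist {X : Banach} (xb u : X) t w : 0 <= t ->
  bdist (pt xb u t w) xb <= t * bnorm u + t ^ 2 / 2 * bnorm w.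
Proof.
  intro Ht. unfold pt. rewrite dist_pt.
  eapply Rle_trans; [apply bnorm_triangle|]. rewrite !bnorm_scal.
  rewrite (Rabs_pos_eq t), (Rabs_pos_eq (t^2/2)); [lra| |lra].
  pose proof (pow2_ge_0 t). lra.
Qed.

Lemma div_lt A s c : 0 < s -> A / s < c -> A < c * s.
Proof.
  intros Hs H. assert (A = A / s * s) by (field; lra). nra.
Qed.

Lemma pt_close {X : Banach} (xb u v : X) d : 0 < d -> exists de, 0 < de /\
  forall t w, 0 < t < de -> bdist w v < 1 -> bdist (pt xb u t w) xb < d.
Proof.
  intros Hd. set (K := bnorm u + bnorm v + 1).
  assert (HK : 1 <= K) by (unfold K; pose proof (bnorm_nonneg _ u); pose proof (bnorm_nonneg _ v); lra).
  exists (Rmin 1 (d / K)). split.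
  { apply Rmin_glb_lt; [lra|]. apply Rdiv_lt_0_compat; lra. }
  intros t w [Ht1 Ht2] Hw.
  assert (t < 1) by (eapply Rlt_le_trans; [apply Ht2|apply Rmin_l]).
  assert (t < d / K) by (eapply Rlt_le_trans; [apply Ht2|apply Rmin_r]).
  assert (t * K < d) by (apply (Rmult_lt_compat_r K) in H0; [|lra]; field_simplify in H0; lra).
  pose proof (pt_dist xb u t w (Rlt_le _ _ Ht1)).
  pose proof (norm_le_dist _ w v). pose proof (bnorm_nonneg _ w).
  pose proof (bnorm_nonneg _ u).
  assert (t^2/2 * bnorm w <= t * (bnorm v + 1)).
  { assert (t^2/2 <= t) by (simpl; nra). nra. }
  unfold K in *. nra.
Qed.

Lemma est_I {X : Banach} (F : X -> R) (xb u v : X) L dL s c :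
  0 < L -> 0 < dL ->
  (forall x y, bdist x xb < dL -> bdist y xb < dL -> F x - F y <= L * bdist x y) ->
  clarke F xb u = Fin 0 ->
  ERle (ERplus (clarke F xb v) (clarke2 F xb u)) (Fin s) -> s < c ->
  exists de et, 0 < de /\ 0 < et /\ forall t w, 0 < t < de -> bdist w v < et ->
    F (pt xb u t w) - F xb < t ^ 2 / 2 * c.
Proof.
  intros HL HdL Hlip Hc0 Hle Hsc.
  destruct (ERplus_split _ _ s ((s + c) / 2) Hle) as [al [be [Hab [Ha Hb]]]]; [lra|].
  destruct (clarke_bound F xb v al Ha) as [d1 [Hd1 H1]].
  destruct (clarke2_bound F xb u be Hb) as [d2 [Hd2 H2]].
  set (K := bnorm u + bnorm v + 1).
  assert (HK : 1 <= K) by (unfold K; pose proof (bnorm_nonneg _ u); pose proof (bnorm_nonneg _ v); lra).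
  set (g := c - (s + c) / 2).
  assert (Hg : 0 < g) by (unfold g; lra).
  exists (Rmin (Rmin 1 d2) (Rmin d1 dL / K)), (Rmin 1 (g / L)).
  assert (Hm : 0 < Rmin d1 dL) by (apply Rmin_glb_lt; lra).
  split. { apply Rmin_glb_lt; [apply Rmin_glb_lt; lra|]. apply Rdiv_lt_0_compat; lra. }
  split. { apply Rmin_glb_lt; [lra|]. apply Rdiv_lt_0_compat; lra. }
  intros t w [Ht0 Htd] Hw.
  assert (Ht1 : t < 1) by (eapply Rlt_le_trans; [apply Htd|]; eapply Rle_trans; apply Rmin_l).
  assert (Ht2 : t < d2) by (eapply Rlt_le_trans; [apply Htd|]; eapply Rle_trans; [apply Rmin_l|apply Rmin_r]).
  assert (Ht3 : t < Rmin d1 dL / K) by (eapply Rlt_le_trans; [apply Htd|apply Rmin_r]).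
  assert (HtK : t * K < Rmin d1 dL)
    by (apply (Rmult_lt_compat_r K) in Ht3; [|lra]; field_simplify in Ht3; lra).
  pose proof (Rmin_l d1 dL). pose proof (Rmin_r d1 dL).
  assert (Hw1 : bdist w v < 1) by (eapply Rlt_le_trans; [apply Hw|apply Rmin_l]).
  assert (Hw2 : bdist w v < g / L) by (eapply Rlt_le_trans; [apply Hw|apply Rmin_r]).
  assert (HLw : L * bdist w v < g)
    by (apply (Rmult_lt_compat_l L) in Hw2; [|lra]; field_simplify in Hw2; lra).
  set (s' := t ^ 2 / 2).
  assert (Hs'0 : 0 < s') by (unfold s'; simpl; nra).
  assert (Hs't : s' < t) by (unfold s'; simpl; nra).
  pose proof (bnorm_nonneg _ u) as Hu0. pose proof (bnorm_nonneg _ v) as Hv0.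
  pose proof (bnorm_nonneg _ w) as Hw0. pose proof (norm_le_dist _ w v) as Hwv.
  pose proof (bdist_nonneg _ w v) as Hwv0.
  set (y := badd xb (bscal t u)).
  set (z := badd y (bscal s' v)).
  assert (Hy : bdist y xb = t * bnorm u).
  { unfold y. rewrite dist_shift0, bnorm_scal, Rabs_pos_eq; lra. }
  assert (Hx : bdist (pt xb u t w) xb < dL).
  { pose proof (pt_dist xb u t w (Rlt_le _ _ Ht0)) as HH. fold s' in HH.
    assert (s' * bnorm w <= t * (bnorm v + 1)) by nra. unfold K in *. nra. }
  assert (Hz : bdist z xb < dL).
  { unfold z, y. rewrite dist_pt.
    pose proof (bnorm_triangle _ (bscal t u) (bscal s' v)) as HH.
    rewrite !bnorm_scal, (Rabs_pos_eq t), (Rabs_pos_eq s') in HH; try lra.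
    assert (s' * bnorm v <= t * (bnorm v + 1)) by nra. unfold K in *. nra. }
  assert (Hxz : F (pt xb u t w) - F z <= L * (s' * bdist w v)).
  { replace (s' * bdist w v) with (bdist (pt xb u t w) z).
    - apply Hlip; auto.
    - unfold pt, z. fold y. fold s'. rewrite dist_shift, opp_scal, <- bscal_distr_l, bnorm_scal.
      rewrite Rabs_pos_eq; [reflexivity|lra]. }
  assert (Hzy : F z - F y < al * s').
  { apply div_lt; auto. apply H1.
    - rewrite Hy. unfold K in *. nra.
    - split; auto. unfold K in *. nra. }
  assert (Hyx : F y - F xb < be * s').
  { apply div_lt; auto. specialize (H2 t (conj Ht0 Ht2)). rewrite Hc0 in H2. simpl in H2.
    fold y in H2. unfold s'. replace (F y - F xb) with (F y - F xb - t * 0) by ring. exact H2. }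
  assert (HA : L * (s' * bdist w v) <= s' * g) by nra.
  assert (HB : F (pt xb u t w) - F xb < s' * (g + al + be)) by nra.
  unfold g in HB. fold s'. nra.
Qed.

Lemma est_notI {X : Banach} (F : X -> R) (xb u v : X) L dL al :
  0 < L -> 0 < dL ->
  (forall x y, bdist x xb < dL -> bdist y xb < dL -> F x - F y <= L * bdist x y) ->
  al < 0 -> ERltR (clarke F xb u) al ->
  exists de, 0 < de /\ forall t w, 0 < t < de -> bdist w v < 1 ->
    F (pt xb u t w) - F xb < 0.
Proof.
  intros HL HdL Hlip Hal Ha.
  destruct (clarke_bound F xb u al Ha) as [d1 [Hd1 H1]].
  set (K := bnorm u + bnorm v + 1).
  assert (HK : 1 <= K) by (unfold K; pose proof (bnorm_nonneg _ u); pose proof (bnorm_nonneg _ v); lra).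
  assert (Hm : 0 < Rmin dL (- al / L)) by (apply Rmin_glb_lt; [lra|apply Rdiv_lt_0_compat; lra]).
  exists (Rmin (Rmin 1 d1) (Rmin dL (- al / L) / K)).
  split. { apply Rmin_glb_lt; [apply Rmin_glb_lt; lra|]. apply Rdiv_lt_0_compat; lra. }
  intros t w [Ht0 Htd] Hw1.
  assert (Ht1 : t < 1) by (eapply Rlt_le_trans; [apply Htd|]; eapply Rle_trans; apply Rmin_l).
  assert (Ht2 : t < d1) by (eapply Rlt_le_trans; [apply Htd|]; eapply Rle_trans; [apply Rmin_l|apply Rmin_r]).
  assert (Ht3 : t < Rmin dL (- al / L) / K) by (eapply Rlt_le_trans; [apply Htd|apply Rmin_r]).
  assert (HtK : t * K < Rmin dL (- al / L))
    by (apply (Rmult_lt_compat_r K) in Ht3; [|lra]; field_simplify in Ht3; lra).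
  pose proof (Rmin_l dL (- al / L)). pose proof (Rmin_r dL (- al / L)).
  assert (HLt : L * (t * K) < - al).
  { assert (HH : t * K < - al / L) by lra.
    apply (Rmult_lt_compat_l L) in HH; [|lra]. field_simplify in HH; lra. }
  set (s' := t ^ 2 / 2).
  assert (Hs'0 : 0 < s') by (unfold s'; simpl; nra).
  assert (Hs't : s' <= t * t) by (unfold s'; simpl; nra).
  pose proof (bnorm_nonneg _ u) as Hu0. pose proof (bnorm_nonneg _ v) as Hv0.
  pose proof (bnorm_nonneg _ w) as Hw0. pose proof (norm_le_dist _ w v) as Hwv.
  set (y := badd xb (bscal t u)).
  assert (Hy : bdist y xb = t * bnorm u).
  { unfold y. rewrite dist_shift0, bnorm_scal, Rabs_pos_eq; lra. }
  assert (Hsw : s' * bnorm w <= t * (t * K)).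
  { unfold K. assert (bnorm w <= bnorm v + 1) by lra.
    apply Rle_trans with (s' * (bnorm v + 1)). nra. nra. }
  assert (Hx : bdist (pt xb u t w) xb < dL).
  { pose proof (pt_dist xb u t w (Rlt_le _ _ Ht0)) as HH. fold s' in HH.
    assert (Hs1 : s' <= t) by (unfold s'; simpl; nra).
    assert (HW : bnorm w <= bnorm v + 1) by lra.
    assert (s' * bnorm w <= t * (bnorm v + 1)).
    { apply Rle_trans with (t * bnorm w). apply Rmult_le_compat_r; lra.
      apply Rmult_le_compat_l; lra. }
    unfold K in *. nra. }
  assert (Hxy : F (pt xb u t w) - F y <= L * (s' * bnorm w)).
  { replace (s' * bnorm w) with (bdist (pt xb u t w) y).
    - apply Hlip; auto. rewrite Hy. unfold K in *. nra.
    - unfold pt. fold y. fold s'. rewrite dist_shift0, bnorm_scal, Rabs_pos_eq; [reflexivity|lra]. }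
  assert (Hyx : F y - F xb < al * t).
  { apply div_lt; auto. apply H1. rewrite dist_refl; lra. split; auto. }
  assert (L * (s' * bnorm w) <= t * (L * (t * K))) by nra.
  nra.
Qed.

Definition ev (P : nat -> Prop) := exists N, forall k, (N <= k)%nat -> P k.

Lemma ev_and (P Q : nat -> Prop) : ev P -> ev Q -> ev (fun k => P k /\ Q k).
Proof.
  intros [N1 H1] [N2 H2]. exists (max N1 N2). intros k Hk. split; [apply H1|apply H2]; lia.
Qed.

Lemma ev_forall p (P : nat -> nat -> Prop) :
  (forall j, (j < p)%nat -> ev (P j)) -> ev (fun k => forall j, (j < p)%nat -> P j k).
Proof.
  induction p as [|p IH]; intros H.
  - exists 0%nat. intros; lia.
  - destruct IH as [N1 H1]. { intros j Hj. apply H. lia. }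
    destruct (H p (Nat.lt_succ_diag_r p)) as [N2 H2].
    exists (max N1 N2). intros k Hk j Hj.
    destruct (Nat.eq_dec j p) as [->|]. apply H2; lia. apply H1; lia.
Qed.

Lemma ev_est (t : nat -> R) {X : Banach} (w : nat -> X) v (Q : R -> X -> Prop) de et :
  Un_cv t 0 -> seq_cv w v -> (forall k, 0 < t k) -> 0 < de -> 0 < et ->
  (forall t w, 0 < t < de -> bdist w v < et -> Q t w) -> ev (fun k => Q (t k) (w k)).
Proof.
  intros Ht Hw Hpos Hde Het H.
  destruct (Ht de Hde) as [N1 H1]. destruct (Hw et Het) as [N2 H2].
  exists (max N1 N2). intros k Hk. apply H.
  - split; auto. specialize (H1 k ltac:(lia)). unfold R_dist in H1.
    rewrite Rminus_0_r in H1. apply Rabs_def2 in H1. lra.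
  - apply H2; lia.
Qed.

Theorem corollary5p2 (X : Banach) (p m : nat) (f g : nat -> X -> R) (xb u : X)
  (Hf : forall i, (i < p)%nat -> loc_lipschitz (f i) xb)
  (Hga : forall j, active m g xb j -> loc_lipschitz (g j) xb)
  (Hgi : forall j, (j < m)%nat -> g j xb <> 0 -> cont_at (g j) xb)
  (Hxb : Q0 m g xb)
  (Hgeo : loc_geoffrion p m f g xb)
  (Hu : critical p m f g xb u)
  (HL : forall v, L2 p m f g xb u v -> T2 (Q0 m g) xb u v) :
  ~ exists v : X,
      (forall i, (i < p)%nat -> clarke (f i) xb u = Fin 0 ->
         ERle (ERplus (clarke (f i) xb v) (clarke2 (f i) xb u)) (Fin 0)) /\
      (exists i, (i < p)%nat /\ clarke (f i) xb u = Fin 0 /\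
         ERlt (ERplus (clarke (f i) xb v) (clarke2 (f i) xb u)) (Fin 0)) /\
      (forall j, active m g xb j -> clarke (g j) xb u = Fin 0 ->
         ERle (ERplus (clarke (g j) xb v) (clarke2 (g j) xb u)) (Fin 0)).
Proof.
  intros [v [HvI [[i0 [Hi0p [Hi0c Hi0lt]]] HvJ]]].
  destruct Hu as [HuF [_ HuG]].
  assert (HL2 : L2 p m f g xb u v).
  { split.
    - intros i Hi. unfold F2; simpl.
      destruct (classic (clarke (f i) xb u = Fin 0)) as [H|H].
      + right; split; auto.
      + left; split; auto.
    - intros j Hj. unfold F2; simpl.
      destruct (classic (clarke (g j) xb u = Fin 0)) as [H|H].
      + right; split; auto.
      + left; split; auto. }
  destruct (HL v HL2) as [t [w [Htpos [Htcv [Hwcv HQ]]]]].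
  destruct Hgeo as [d [Hd [_ [M [HM HG]]]]].
  destruct (ERlt_neg _ Hi0lt) as [s0 [Hs0 Hs0le]].
  destruct (lip_pos _ _ (Hf i0 Hi0p)) as [L0 [dL0 [HL0 [HdL0 Hlip0]]]].
  destruct (est_I (f i0) xb u v L0 dL0 s0 (s0/4) HL0 HdL0 Hlip0 Hi0c Hs0le ltac:(lra))
    as [de0 [et0 [Hde0 [Het0 Hest0]]]].
  assert (E0 : ev (fun k => f i0 (pt xb u (t k) (w k)) - f i0 xb < t k ^ 2 / 2 * (s0 / 4))).
  { apply (ev_est t w v (fun t w => f i0 (pt xb u t w) - f i0 xb < t ^ 2 / 2 * (s0 / 4)) de0 et0);
      auto. }
  assert (Eall : ev (fun k => forall j, (j < p)%nat ->
            M * (f j (pt xb u (t k) (w k)) - f j xb) < t k ^ 2 / 2 * (- s0 / 4))).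
  { apply ev_forall. intros j Hj.
    destruct (lip_pos _ _ (Hf j Hj)) as [L [dL [HL' [HdL Hlip]]]].
    destruct (classic (clarke (f j) xb u = Fin 0)) as [H|H].
    - destruct (est_I (f j) xb u v L dL 0 (- s0 / (4 * M)) HL' HdL Hlip H (HvI j Hj H))
        as [de [et [Hde [Het Hest]]]].
      { apply Rdiv_lt_0_compat; lra. }
      apply (ev_est t w v (fun t w => M * (f j (pt xb u t w) - f j xb) < t ^ 2 / 2 * (- s0 / 4)) de et);
        auto.
      intros t' w' Ht' Hw'. specialize (Hest t' w' Ht' Hw').
      assert (t' ^ 2 / 2 * (- s0 / 4) = M * (t' ^ 2 / 2 * (- s0 / (4 * M)))) by (field; lra).
      rewrite H0. apply Rmult_lt_compat_l; auto.
    - destruct (ERle_ne_ltR _ (HuF j Hj) H) as [al [Hal Hal2]].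
      destruct (est_notI (f j) xb u v L dL al HL' HdL Hlip Hal Hal2) as [de [Hde Hest]].
      apply (ev_est t w v (fun t w => M * (f j (pt xb u t w) - f j xb) < t ^ 2 / 2 * (- s0 / 4)) de 1);
        auto; try lra.
      intros t' w' Ht' Hw'. specialize (Hest t' w' Ht' Hw').
      assert (0 < t' ^ 2 / 2 * (- s0 / 4)).
      { destruct Ht' as [Ht'0 _]. apply Rmult_lt_0_compat; [|lra].
        assert (0 < t' ^ 2) by (apply pow_lt; lra). lra. }
      nra. }
  destruct (pt_close xb u v d Hd) as [dc [Hdc Hcl]].
  assert (Ec : ev (fun k => bdist (pt xb u (t k) (w k)) xb < d)).
  { apply (ev_est t w v (fun t w => bdist (pt xb u t w) xb < d) dc 1); auto; lra. }
  destruct (ev_and _ _ E0 (ev_and _ _ Eall Ec)) as [N HN].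
  destruct (HN N (le_n N)) as [H0 [Hall Hc]].
  set (x := pt xb u (t N) (w N)) in *.
  assert (Hpos : 0 < t N ^ 2 / 2 * (- s0 / 4)).
  { apply Rmult_lt_0_compat; [|lra].
    assert (0 < t N ^ 2) by (apply pow_lt; apply Htpos). lra. }
  destruct (HG i0 x Hi0p Hc (HQ N) ltac:(lra)) as [j [Hjp [Hgt Hrat]]].
  specialize (Hall j Hjp).
  assert (Hden : 0 < f j x - f j xb) by lra.
  assert (f i0 xb - f i0 x <= M * (f j x - f j xb)).
  { assert (f i0 xb - f i0 x = (f i0 xb - f i0 x) / (f j x - f j xb) * (f j x - f j xb))
      by (field; lra). rewrite H. apply Rmult_le_compat_r; lra. }
  lra.
Qed.
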